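(* Let $A$ be a binary ($\{0,1\}$-valued) $n\times m$ matrix, let $R$ be either the binary rank $R_{binary}$ or the boolean rank $R_{bool}$, and let $k=R(A)$. Bases and spanning below are taken in the binary sense if $R=R_{binary}$ and in the boolean sense if $R=R_{bool}$. (1) If $A$ has a base that spans all other bases of $A$, then for every set of binary column vectors $x_1,\dots,x_t$ of length $n$ with $R(A|x_i)=k$ for all $1\le i\le t$, it also holds that $R(A|x_1,\dots,x_t)=k$. (2) If there is no base of $A$ that spans all other bases of $A$, then there exist binary column vectors $x_1,\dots,x_t$ of length $n$ such that $R(A|x_i)=k$ for all $1\le i\le t$, but $R(A|x_1,\dots,x_t)>k$. In particular, $A$ has the Augmentation property for $R$ if and only if $A$ has a base that spans all other bases of $A$.
   Context: Binary rank: for a binary $n\times m$ matrix $A$, $R_{binary}(A)$ is the least $k$ such that $A=UV$ with $U\in\{0,1\}^{n\times k}$, $V\in\{0,1\}^{k\times m}$, the product computed with ordinary real arithmetic. Boolean rank $R_{bool}(A)$: the same, except that the product is computed in the Boolean semiring ($1+1=1$, i.e. entrywise OR of ANDs). A set $X$ of $\{0,1\}$-vectors spans a vector $y$ in the binary sense if $y=\sum_{x\in X}c_x x$ for some coefficients $c_x\in\{0,1\}$ with ordinary addition, and in the boolean sense if the same holds with boolean addition ($1+1=1$). $X$ spans a set $Y$ if it spans every vector of $Y$. A base of $A$ (binary, resp. boolean) is a set of $\{0,1\}$ column vectors of length $n$ that spans all columns of $A$ and is a minimal spanning set, i.e. has minimum cardinality among such spanning sets. $(A|x_1,\dots,x_t)$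 denotes $A$ augmented with the columns $x_1,\dots,x_t$ appended on the right. A matrix $A$ has the Augmentation property for a rank function $R$ if for every collection of column vectors $x_1,\dots,x_t$ with $R(A|x_i)=R(A)$ for all $i$, also $R(A|x_1,\dots,x_t)=R(A)$. *)

(* Defs.v *)
From mathcomp Require Import all_boot all_algebra.
Set Implicit Arguments.
Unset Strict Implicit.
Unset Printing Implicit Defensive.

(* Which rank / spanning notion: binary (ordinary arithmetic over nat)
   or boolean (1+1=1, i.e. OR of ANDs). *)
Inductive rank_mode := Binary | Boolean.

(* A binary (0/1) matrix / vector is represented with entries in bool;
   (b : nat) is 1 if b is true and 0 otherwise. *)

Definition prod_entry_ok (md : rank_mode) (k : nat)
  (a : bool) (u : 'I_k -> bool) (v : 'I_k -> bool) : bool :=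
  match md with
  | Binary => (a : nat) == \sum_(l < k) ((u l && v l) : nat)
  | Boolean => a == [exists l, u l && v l]
  end.

Definition has_factorization (md : rank_mode) (n m : nat)
  (A : 'M[bool]_(n, m)) (k : nat) : bool :=
  [exists U : 'M[bool]_(n, k), exists V : 'M[bool]_(k, m),
     [forall i, forall j,
        prod_entry_ok md (A i j) (fun l => U i l) (fun l => V l j)]].

Lemma has_factorization_m (md : rank_mode) (n m : nat) (A : 'M[bool]_(n, m)) :
  exists k, has_factorization md A k.
Proof.
exists m; apply/existsP; exists A; apply/existsP.
exists (\matrix_(l, j) (l == j))%R; apply/forallP => i; apply/forallP => j.
case: md => /=.
- rewrite (bigD1 j) //= !mxE eqxx andbT big1 ?addn0 //.
  by move=> l /negbTE hl; rewrite !mxE hl andbF.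
- apply/eqP; apply/idP/existsP.
  + by move=> h; exists j; rewrite !mxE eqxx h.
  + by case=> l; rewrite !mxE => /andP [h /eqP <-].
Qed.

Definition mxrank01 (md : rank_mode) (n m : nat) (A : 'M[bool]_(n, m)) : nat :=
  ex_minn (has_factorization_m md A).

(* X spans y: y = sum_{x in X} c_x x with c_x in {0,1}, i.e. y is the
   (binary resp. boolean) sum of some subset S of X. *)
Definition spans (md : rank_mode) (n : nat)
  (X : {set 'cV[bool]_n}) (y : 'cV[bool]_n) : bool :=
  [exists S : {set 'cV[bool]_n}, (S \subset X) &&
     [forall i, match md with
                | Binary => (y i ord0 : nat) == \sum_(x in S) (x i ord0 : nat)
                | Boolean => y i ord0 == [exists x in S, x i ord0]
                end]].

Definition spans_set (md : rank_mode) (n : nat)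
  (X Y : {set 'cV[bool]_n}) : Prop :=
  forall y, y \in Y -> spans md X y.

Definition spans_cols (md : rank_mode) (n m : nat)
  (A : 'M[bool]_(n, m)) (X : {set 'cV[bool]_n}) : Prop :=
  forall j : 'I_m, spans md X (col j A).

Definition is_base (md : rank_mode) (n m : nat)
  (A : 'M[bool]_(n, m)) (B : {set 'cV[bool]_n}) : Prop :=
  spans_cols md A B /\
  forall B' : {set 'cV[bool]_n}, spans_cols md A B' -> #|B| <= #|B'|.

Definition has_universal_base (md : rank_mode) (n m : nat)
  (A : 'M[bool]_(n, m)) : Prop :=
  exists B, is_base md A B /\
    forall B', is_base md A B' -> spans_set md B B'.

Definition augment (n m t : nat) (A : 'M[bool]_(n, m))
  (x : 'I_t -> 'cV[bool]_n) : 'M[bool]_(n, m + t) :=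
  row_mx A (\matrix_(i, j) x j i ord0)%R.

Definition augment1 (n m : nat) (A : 'M[bool]_(n, m))
  (x : 'cV[bool]_n) : 'M[bool]_(n, m + 1) := row_mx A x.

Definition augmentation_property (md : rank_mode) (n m : nat)
  (A : 'M[bool]_(n, m)) : Prop :=
  forall (t : nat) (x : 'I_t -> 'cV[bool]_n),
    (forall i, mxrank01 md (augment1 A (x i)) = mxrank01 md A) ->
    mxrank01 md (augment A x) = mxrank01 md A.

(* Main.v *)
Require Import Defs.
From mathcomp Require Import all_boot all_algebra.
From Stdlib Require Import Classical.
Set Implicit Arguments. Unset Strict Implicit. Unset Printing Implicit Defensive.

Definition spcond (md : rank_mode) (n : nat) (S : {set 'cV[bool]_n}) (y : 'cV[bool]_n) : bool :=
  [forall i, match md with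
                | Binary => (y i ord0 : nat) == \sum_(x in S) (x i ord0 : nat)
                | Boolean => y i ord0 == [exists x in S, x i ord0]
                end].

Lemma spansE md n (X : {set 'cV[bool]_n}) y :
  spans md X y = [exists S : {set 'cV[bool]_n}, (S \subset X) && spcond md S y].
Proof. by []. Qed.

Definition spick md n (X : {set 'cV[bool]_n}) (y : 'cV[bool]_n) :=
  odflt set0 [pick S : {set 'cV[bool]_n} | (S \subset X) && spcond md S y].

Lemma spickP md n (X : {set 'cV[bool]_n}) y : spans md X y ->
  (spick md X y \subset X) /\ spcond md (spick md X y) y.
Proof.
rewrite spansE /spick; case: pickP => [S /andP[-> ->] //| h /existsP [S]].
by rewrite h.
Qed.

Lemma spans_ext md n X (y y' : 'cV[bool]_n) :
  (forall i, y i ord0 = y' i ord0) -> spans md X y = spans md X y'.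
Proof.
move=> h; rewrite !spansE; apply: eq_existsb => S; congr (_ && _).
by apply: eq_forallb => i; rewrite h.
Qed.

Lemma spans_mem md n (X : {set 'cV[bool]_n}) y : y \in X -> spans md X y.
Proof.
move=> yX; apply/existsP; exists [set y]; rewrite sub1set yX /=.
apply/forallP => i; case: md => /=.
  by rewrite big_set1.
apply/eqP; apply/idP/existsP => [h|[x /andP[/set1P -> //]]].
by exists y; rewrite set11 h.
Qed.

Lemma sum_imset_le (I T : finType) (f : I -> T) (P : {set I}) (g : T -> nat) :
  \sum_(x in f @: P) g x <= \sum_(l in P) g (f l).
Proof.
rewrite (partition_big_imset f); apply: leq_sum => x /imsetP [l Pl ->].
by rewrite (bigD1 l) /= ?Pl ?eqxx // leq_addr.
Qed.

Lemma sum_img (I : finType) n (f : I -> 'cV[bool]_n) (P : {set I}) (z : 'cV[bool]_n) i :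
  (z i ord0 : nat) = \sum_(l in P) (f l i ord0 : nat) ->
  (z i ord0 : nat) = \sum_(x in f @: P) (x i ord0 : nat).
Proof.
move=> h; apply/eqP; rewrite eqn_leq; apply/andP; split; last first.
  by rewrite h; apply: (sum_imset_le f P (fun x : 'cV[bool]_n => (x i ord0 : nat))).
case: (boolP [exists l in P, f l i ord0]) => [/existsP [l /andP [Pl fl]] | /existsPn hn].
  apply: leq_trans (leq_b1 _) _.
  by rewrite (bigD1 (f l)) /= ?fl ?imset_f.
rewrite h big1 // => l Pl; move: (hn l); rewrite Pl /=.
by move=> /negbTE ->.
Qed.

Lemma spans_trans md n (X Y : {set 'cV[bool]_n}) z :
  (forall y, y \in Y -> spans md X y) -> spans md Y z -> spans md X z.
Proof.
move=> hY /spickP; set S := spick md Y z; case=> SY Sz.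
pose T := fun y => spick md X y.
have hT : forall y, y \in S -> (T y \subset X) /\ spcond md (T y) y.
  by move=> y yS; apply: spickP; apply: hY; apply: (subsetP SY).
pose P := [set p : 'cV[bool]_n * 'cV[bool]_n | (p.1 \in S) && (p.2 \in T p.1)].
apply/existsP; exists (snd @: P); apply/andP; split.
  apply/subsetP => x /imsetP [p]; rewrite inE => /andP [p1 p2] ->.
  by have [/subsetP ->] := hT _ p1.
apply/forallP => i; move/forallP: Sz => /(_ i).
destruct md => /=.
- move=> /eqP Sz; apply/eqP; apply: (sum_img (f := snd)).
  rewrite Sz (eq_bigr (fun y => \sum_(x in T y) (x i ord0 : nat))); last first.
    by move=> y yS; have [_ /forallP /(_ i) /= /eqP] := hT y yS.
  rewrite pair_big_dep; apply: eq_bigl => p; by rewrite inE.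
- move=> /eqP ->; apply/eqP; apply/existsP/existsP.
    case=> y /andP [yS yi].
    have [_ /forallP /(_ i) /= /eqP] := hT y yS; rewrite yi.
    move=> /esym /existsP [x /andP [xT xi]].
    by exists x; rewrite xi andbT; apply/imsetP; exists (y, x); rewrite // inE yS.
  case=> x /andP [/imsetP [p]]; rewrite inE => /andP [p1 p2] -> xi.
  exists p.1; rewrite p1 /=.
  have [_ /forallP /(_ i) /= /eqP ->] := hT _ p1.
  by apply/existsP; exists p.2; rewrite p2.
Qed.

Lemma fact_spans md n m (A : 'M[bool]_(n, m)) k :
  has_factorization md A k ->
  exists B, spans_cols md A B /\ #|B| <= k.
Proof.
move=> /existsP [U /existsP [V /forallP h]].
exists ((fun l => col l U) @: [set: 'I_k]); split; last first.
  by apply: leq_trans (leq_imset_card _ _) _; rewrite cardsT card_ord.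
move=> j; apply/existsP; exists ((fun l => col l U) @: [set l | V l j]).
rewrite imsetS ?subsetT //=; apply/forallP => i.
move: (h i) => /forallP /(_ j).
destruct md => /= /eqP hij.
- apply/eqP; apply: sum_img; rewrite mxE hij [RHS]big_mkcond /=.
  apply: eq_bigr => l _; rewrite inE !mxE.
  by case: (V l j); rewrite ?andbT ?andbF.
- rewrite mxE hij; apply/eqP; apply/existsP/existsP.
    by case=> l /andP [u v]; exists (col l U); rewrite mxE u andbT; apply/imsetP; exists l; rewrite ?inE.
  case=> x /andP [/imsetP [l]]; rewrite inE => v -> u.
  by exists l; move: u; rewrite v andbT mxE.
Qed.

Lemma spans_fact md n m (A : 'M[bool]_(n, m)) (B : {set 'cV[bool]_n}) :
  spans_cols md A B -> has_factorization md A #|B|.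
Proof.
move=> hB.
pose S := fun j => spick md B (col j A).
have hS : forall j, (S j \subset B) /\ spcond md (S j) (col j A).
  by move=> j; apply: spickP.
apply/existsP; exists (\matrix_(i, l) (enum_val l : 'cV[bool]_n) i ord0)%R.
apply/existsP; exists (\matrix_(l, j) (enum_val l \in S j))%R.
apply/forallP => i; apply/forallP => j.
have [sub /forallP /(_ i)] := hS j.
clear hS; destruct md => /= /eqP; rewrite ?mxE => ->.
- apply/eqP.
  rewrite (eq_bigr (fun l => ((enum_val l : 'cV[bool]_n) i ord0 && (enum_val l \in S j) : nat))); last by move=> l _; rewrite !mxE.
  rewrite -(big_enum_val (A := mem B) (fun x : 'cV[bool]_n => (x i ord0 && (x \in S j) : nat))).
  rewrite big_mkcond [RHS]big_mkcond /=; apply: eq_bigr => x _.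
  case: (boolP (x \in S j)) => xs; first by rewrite (subsetP sub) //= andbT.
  by case: (x \in B); rewrite ?andbF.
- apply/eqP; apply/existsP/existsP.
    case=> x /andP [xs xi].
    have xB : x \in B by apply: (subsetP sub).
    by exists (enum_rank_in xB x); rewrite !mxE enum_rankK_in // xs xi.
  by case=> l; rewrite !mxE => /andP [xi xs]; exists (enum_val l); rewrite xs xi.
Qed.

Lemma rank_le md n m (A : 'M[bool]_(n, m)) B :
  spans_cols md A B -> mxrank01 md A <= #|B|.
Proof.
move=> /spans_fact h; rewrite /mxrank01; case: ex_minnP => r _ hmin.
exact: hmin.
Qed.

Lemma rank_wit md n m (A : 'M[bool]_(n, m)) :
  exists B, spans_cols md A B /\ #|B| = mxrank01 md A.
Proof.
have := rank_le (md := md) (A := A).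
rewrite /mxrank01; case: ex_minnP => r hr _ hle.
have [B [sB cB]] := fact_spans hr.
exists B; split=> //; apply/eqP; rewrite eqn_leq cB /=; exact: hle.
Qed.

Lemma base_card md n m (A : 'M[bool]_(n, m)) B :
  is_base md A B -> #|B| = mxrank01 md A.
Proof.
case=> sB minB; apply/eqP; rewrite eqn_leq rank_le // andbT.
have [B0 [sB0 <-]] := rank_wit md A; exact: minB.
Qed.

Lemma base_of md n m (A : 'M[bool]_(n, m)) B :
  spans_cols md A B -> #|B| <= mxrank01 md A -> is_base md A B.
Proof.
move=> sB cB; split=> // B' sB'; exact: leq_trans cB (rank_le sB').
Qed.

Lemma cols_augment md n m t (A : 'M[bool]_(n, m)) (x : 'I_t -> 'cV[bool]_n) B :
  spans_cols md (augment A x) B <-> spans_cols md A B /\ forall i, spans md B (x i).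
Proof.
split.
- move=> h; split => [j|l].
  + rewrite -(@spans_ext _ _ _ (col (lshift t j) (augment A x))); first exact: h.
    by move=> i; rewrite [in LHS]mxE /augment row_mxEl mxE.
  + rewrite -(@spans_ext _ _ _ (col (rshift m l) (augment A x))); first exact: h.
    by move=> i; rewrite [in LHS]mxE /augment row_mxEr mxE.
- case=> hA hx j'; rewrite -(splitK j'); case: (split j') => [j|l] /=.
  + rewrite (@spans_ext _ _ _ _ (col j A)); first exact: hA.
    by move=> i; rewrite [in LHS]mxE /augment row_mxEl mxE.
  + rewrite (@spans_ext _ _ _ _ (x l)); first exact: hx.
    by move=> i; rewrite [in LHS]mxE /augment row_mxEr mxE.
Qed.

Lemma cols_augment1 md n m (A : 'M[bool]_(n, m)) (x : 'cV[bool]_n) B :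
  spans_cols md (augment1 A x) B <-> spans_cols md A B /\ spans md B x.
Proof.
split.
- move=> h; split => [j|].
  + rewrite -(@spans_ext _ _ _ (col (lshift 1 j) (augment1 A x))); first exact: h.
    by move=> i; rewrite [in LHS]mxE /augment1 row_mxEl mxE.
  + rewrite -(@spans_ext _ _ _ (col (rshift m ord0) (augment1 A x))); first exact: h.
    by move=> i; rewrite [in LHS]mxE /augment1 row_mxEr.
- case=> hA hx j'; rewrite -(splitK j'); case: (split j') => [j|l] /=.
  + rewrite (@spans_ext _ _ _ _ (col j A)); first exact: hA.
    by move=> i; rewrite [in LHS]mxE /augment1 row_mxEl mxE.
  + rewrite (@spans_ext _ _ _ _ x); first exact: hx.
    by move=> i; rewrite [in LHS]mxE /augment1 row_mxEr (ord1 l).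
Qed.

Lemma part1 md n m (A : 'M[bool]_(n, m)) :
  has_universal_base md A -> forall t (x : 'I_t -> 'cV[bool]_n),
  (forall i, mxrank01 md (augment1 A (x i)) = mxrank01 md A) ->
  mxrank01 md (augment A x) = mxrank01 md A.
Proof.
move=> [B [bB univ]] t x hx.
have cB := base_card bB.
have sx : forall i, spans md B (x i).
  move=> i; have [Bi [sBi cBi]] := rank_wit md (augment1 A (x i)).
  move/cols_augment1: sBi => [sA sxi].
  have bBi : is_base md A Bi by apply: base_of; rewrite // cBi hx.
  exact: spans_trans (univ _ bBi) sxi.
case: bB => sB _.
apply/eqP; rewrite eqn_leq; apply/andP; split.
  by rewrite -cB; apply: rank_le; apply/cols_augment; split.
have [B' [sB' <-]] := rank_wit md (augment A x).
by apply: rank_le; case/cols_augment: sB'.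
Qed.

Definition baseb md n m (A : 'M[bool]_(n, m)) (B : {set 'cV[bool]_n}) : bool :=
  [forall j, spans md B (col j A)] &&
  [forall B' : {set 'cV[bool]_n}, [forall j, spans md B' (col j A)] ==> (#|B| <= #|B'|)].

Lemma basebP md n m (A : 'M[bool]_(n, m)) B : reflect (is_base md A B) (baseb md A B).
Proof.
apply: (iffP andP) => [[/forallP h1 /forallP h2]|[h1 h2]]; split.
- exact: h1.
- by move=> B' hB'; move: (h2 B') => /implyP; apply; apply/forallP.
- by apply/forallP.
- by apply/forallP => B'; apply/implyP => /forallP; exact: h2.
Qed.

Lemma part2 md n m (A : 'M[bool]_(n, m)) :
  ~ has_universal_base md A ->
     exists (t : nat) (x : 'I_t -> 'cV[bool]_n),
       (forall i, mxrank01 md (augment1 A (x i)) = mxrank01 md A) /\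
       mxrank01 md A < mxrank01 md (augment A x).
Proof.
move=> nU.
pose X := [set y : 'cV[bool]_n | [exists B, baseb md A B && (y \in B)]].
exists #|X|, (fun i : 'I_#|X| => (enum_val i : 'cV[bool]_n)); split.
- move=> i; have : (enum_val i : 'cV[bool]_n) \in X := enum_valP i.
  rewrite inE => /existsP [B /andP [/basebP bB yB]].
  have cB := base_card bB; case: bB => sB _.
  apply/eqP; rewrite eqn_leq; apply/andP; split.
    by rewrite -cB; apply: rank_le; apply/cols_augment1; split => //; exact: spans_mem.
  have [B' [sB' <-]] := rank_wit md (augment1 A (enum_val i)).
  by apply: rank_le; case/cols_augment1: sB'.
- rewrite ltnNge; apply/negP => hle; apply: nU.
  have [B' [sB' cB']] := rank_wit md (augment A (fun i : 'I_#|X| => (enum_val i : 'cV[bool]_n))).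
  case/cols_augment: sB' => sA sx.
  have bB' : is_base md A B' by apply: base_of; rewrite // cB'.
  exists B'; split => // B2 bB2 y yB2.
  have yX : y \in X.
    by rewrite inE; apply/existsP; exists B2; rewrite yB2 andbT; apply/basebP.
  by have := sx (enum_rank_in yX y); rewrite enum_rankK_in.
Qed.

Theorem theorem1 (md : rank_mode) (n m : nat) (A : 'M[bool]_(n, m)) :
  (has_universal_base md A ->
     forall (t : nat) (x : 'I_t -> 'cV[bool]_n),
       (forall i, mxrank01 md (augment1 A (x i)) = mxrank01 md A) ->
       mxrank01 md (augment A x) = mxrank01 md A)
  /\
  (~ has_universal_base md A ->
     exists (t : nat) (x : 'I_t -> 'cV[bool]_n),
       (forall i, mxrank01 md (augment1 A (x i)) = mxrank01 md A) /\
       mxrank01 md A < mxrank01 md (augment A x))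
  /\
  (augmentation_property md A <-> has_universal_base md A).
Proof.
split; first exact: part1.
split; first exact: part2.
split.
- move=> hA; apply: NNPP => nU.
  have [t [x [h1 h2]]] := part2 nU.
  by move: h2; rewrite (hA t x h1) ltnn.
- by move=> hU t x; exact: part1.
Qed.
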